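(* Let $V$ be a braided vector space of diagonal type over a field $F$ of characteristic zero with basis $x_1,\dots,x_n$ and braiding $C(x_i\otimes x_j)=p_{i,j}x_j\otimes x_i$, and let $\mathfrak B(V)$ be its Nichols algebra. The following are equivalent: (1) $\mathfrak L(V)=\mathfrak L(V)_L$; (2) $\mathfrak L(V)=\mathfrak L^-(V)$; (3) $p_{i,i}^2=1$ for all $i$ and $p_{i,j}=p_{j,i}=1$ for all $1\le i\ne j\le n$. In this case $\mathfrak L(V)=\mathfrak L(V)_L=V$.
   Context: $\mathfrak B(V)=T(V)/\bigoplus_{m\ge2}\ker S_m$ is $\mathbb Z^n$-graded with $\deg x_i=e_i$; for homogeneous $u,v$ with $\deg u=\sum a_ie_i$, $\deg v=\sum b_je_j$ put $p_{u,v}=\prod p_{i,j}^{a_ib_j}$. $\mathfrak L(V)$ is the smallest subspace of $\mathfrak B(V)$ containing $V$ and closed under the braided bracket $[u,v]=uv-p_{u,v}vu$ (homogeneous $u,v$, extended bilinearly). $\mathfrak L(V)_L$ is the Lie subalgebra of $\mathfrak B(V)$ generated by $V$ under $[u,v]_L=p_{v,u}uv-p_{u,v}vu$, and $\mathfrak L^-(V)$ the Lie subalgebra generated by $V$ under the commutator $[u,v]^-=uv-vu$. *)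

(* Defs.v *)
From HB Require Import structures.
From mathcomp Require Import all_boot all_order all_algebra all_fingroup.
Set Implicit Arguments. Unset Strict Implicit. Unset Printing Implicit Defensive.
Import GRing.Theory.
Local Open Scope ring_scope.

Section Nichols.
Variable F : fieldType.
Variable n : nat.
(* braiding matrix: C(x_i (x) x_j) = p i j  x_j (x) x_i *)
Variable p : 'I_n -> 'I_n -> F.

(* words in the basis letters x_0..x_{n-1}; an element of T(V) is given by its
   coefficient on each word (finite support is imposed where relevant) *)
Definition word := seq 'I_n.
Definition tens := word -> F.
Definition tzero : tens := fun _ => 0.
Definition tadd (u v : tens) : tens := fun w => u w + v w.
Definition tscale (a : F) (u : tens) : tens := fun w => a * u w.
Definition tsub (u v : tens) : tens := tadd u (tscale (-1) v).
Definition tmul (u v : tens) : tens :=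
  fun w => \sum_(k < (size w).+1) u (take k w) * v (drop k w).
Definition gen (i : 'I_n) : tens := fun w => if w == [:: i] then 1 else 0.
Definition finsupp (u : tens) := exists N : nat, forall w, (N <= size w)%N -> u w = 0.

Definition deg := 'I_n -> nat.
Definition homog (d : deg) (u : tens) :=
  forall w, u w != 0 -> forall i, count_mem i w = d i.
Definition pdeg (d e : deg) : F := \prod_(i < n) \prod_(j < n) p i j ^+ (d i * e j).

(* quantum symmetrizer S_m = sum_{s in S_m} M(s) (Matsumoto lift); for diagonal
   braiding M(s) sends the letter at position k to position s k, with a factor
   p_{t_k,t_l} for every inversion k < l, s k > s l. *)
Definition permword m (s : 'S_m) (t : m.-tuple 'I_n) : word :=
  [seq tnth t ((s^-1)%g k) | k <- enum 'I_m].
Definition braidcoef m (s : 'S_m) (t : m.-tuple 'I_n) : F :=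
  \prod_(k < m) \prod_(l < m | ((k < l)%N && (s l < s k)%N)) p (tnth t k) (tnth t l).
Definition qsym m (u : tens) : tens :=
  fun w => \sum_(t : m.-tuple 'I_n) \sum_(s : 'S_m)
             u (val t) * braidcoef s t * (w == permword s t)%:R.

(* the ideal  (+)_{m >= 2} ker S_m  of T(V) *)
Definition nichols_ideal (u : tens) :=
  [/\ finsupp u, u [::] = 0, (forall w, size w = 1%N -> u w = 0)
    & forall m, (2 <= m)%N -> qsym m u = tzero].

(* subspaces of B(V) = T(V)/I are represented by their preimages in T(V),
   i.e. subspaces containing I *)
Definition subspaceB (P : tens -> Prop) :=
  [/\ P tzero, (forall u v, P u -> P v -> P (tadd u v)),
      (forall a u, P u -> P (tscale a u)) & (forall u, nichols_ideal u -> P u)].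

Definition contains_V (P : tens -> Prop) := forall i, P (gen i).

Definition braided_br (d e : deg) (u v : tens) : tens :=
  tsub (tmul u v) (tscale (pdeg d e) (tmul v u)).
Definition lieL_br (d e : deg) (u v : tens) : tens :=
  tsub (tscale (pdeg e d) (tmul u v)) (tscale (pdeg d e) (tmul v u)).
Definition comm_br (u v : tens) : tens := tsub (tmul u v) (tmul v u).

Definition LV (u : tens) : Prop :=
  forall P, subspaceB P -> contains_V P ->
   (forall d e a b, homog d a -> homog e b -> P a -> P b -> P (braided_br d e a b)) ->
   P u.
Definition LV_L (u : tens) : Prop :=
  forall P, subspaceB P -> contains_V P ->
   (forall d e a b, homog d a -> homog e b -> P a -> P b -> P (lieL_br d e a b)) ->
   P u.
Definition LV_minus (u : tens) : Prop :=
  forall P, subspaceB P -> contains_V P ->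
   (forall a b, P a -> P b -> P (comm_br a b)) -> P u.
Definition Vsp (u : tens) : Prop :=
  exists c : 'I_n -> F,
    nichols_ideal (tsub u (fun w => \sum_(i < n) c i * gen i w)).
End Nichols.

(* Main.v *)
Require Import Defs.
From mathcomp Require Import all_boot all_order all_algebra all_fingroup.
From mathcomp Require Import zify ring.
From Stdlib Require Import FunctionalExtensionality.
Import GRing.Theory.
Local Open Scope ring_scope.
Set Implicit Arguments. Unset Strict Implicit. Unset Printing Implicit Defensive.

Section S.
Variables (F : fieldType) (n : nat) (p : 'I_n -> 'I_n -> F).
Local Notation tens := (tens F n).
Local Notation qs := (qsym p).

Definition wt m (s : 'S_m) (w : m.-tuple 'I_n) : m.-tuple 'I_n :=
  [tuple tnth w (s j) | j < m].

Lemma permwordE m (s : 'S_m) (t : m.-tuple 'I_n) :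
  permword s t = val [tuple tnth t ((s^-1)%g k) | k < m].
Proof. by rewrite /permword /= /mktuple /=. Qed.

Lemma size_permword m (s : 'S_m) (t : m.-tuple 'I_n) : size (permword s t) = m.
Proof. by rewrite permwordE size_tuple. Qed.

Lemma qsym_size m f w : size w != m -> qs m f w = 0.
Proof.
move=> Hw; rewrite /qsym big1 // => t _; rewrite big1 // => s _.
have -> : (w == permword s t) = false.
  by apply/negbTE; apply: contra Hw => /eqP ->; rewrite size_permword.
by rewrite mulr0.
Qed.

Lemma permword_eq m (s : 'S_m) (t w : m.-tuple 'I_n) :
  (val w == permword s t) = (t == wt s w).
Proof.
rewrite permwordE; apply/eqP/eqP => [H|->].
  have Hw : w = [tuple tnth t ((s^-1)%g k) | k < m] by apply: val_inj.
  apply: eq_from_tnth => j; rewrite tnth_mktuple Hw tnth_mktuple permK //.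
congr val; apply: eq_from_tnth => k; rewrite !tnth_mktuple permKV //.
Qed.

Lemma qsymE m f (w : m.-tuple 'I_n) :
  qs m f w = \sum_(s : 'S_m) f (wt s w) * braidcoef p s (wt s w).
Proof.
rewrite /qsym exchange_big; apply: eq_bigr => s _.
rewrite (bigD1 (wt s w)) //= permword_eq eqxx mulr1 big1 ?addr0 // => t Ht.
by rewrite permword_eq (negbTE Ht) mulr0.
Qed.


Lemma lift_ltn N (k : 'I_N.+1) (x y : 'I_N) : (lift k x < lift k y)%N = (x < y)%N.
Proof. rewrite /= /bump; do 2 case: leqP => ?; lia. Qed.

Lemma lift_gtk N (k : 'I_N.+1) (x : 'I_N) : (k < lift k x)%N = (k <= x)%N.
Proof. rewrite /= /bump; case: leqP => ?; lia. Qed.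

Lemma lift_ltk N (k : 'I_N.+1) (x : 'I_N) : (lift k x < k)%N = (x < k)%N.
Proof. rewrite /= /bump; case: leqP => ?; lia. Qed.

Lemma widen_lift N (i : 'I_N) : widen_ord (leqnSn N) i = lift ord_max i.
Proof. by apply: val_inj; rewrite /= /bump; case: leqP => H //; move: (ltn_ord i); lia. Qed.

Definition del N (w : N.+1.-tuple 'I_n) (k : 'I_N.+1) : N.-tuple 'I_n :=
  [tuple tnth w (lift k j) | j < N].
Definition dR (l : 'I_n) (f : tens) : tens := fun t => f (rcons t l).
Definition coefR N (w : N.+1.-tuple 'I_n) (k : 'I_N.+1) : F :=
  \prod_(c : 'I_N | (k <= c)%N) p (tnth w (lift k c)) (tnth w k).

Lemma reindex_lift_perm N (i j : 'I_N.+1) (G : 'S_N.+1 -> F) :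
  \sum_(s : 'S_N.+1 | s i == j) G s = \sum_(s : 'S_N) G (lift_perm i j s).
Proof.
rewrite (reindex (lift_perm i j)); last first.
  pose ulsf i (s : 'S_N.+1) k := odflt k (unlift (s i) (s (lift i k))).
  have ulsfK i' (s : 'S_N.+1) k: lift (s i') (ulsf i' s k) = s (lift i' k).
    rewrite /ulsf; have:= neq_lift i' k.
    by rewrite -(can_eq (permK s)) => /unlift_some[] ? ? ->.
  have inj_ulsf: injective (ulsf i _).
    move=> s; apply: can_inj (ulsf (s i) s^-1%g) _ => k'.
    by rewrite {1}/ulsf ulsfK !permK liftK.
  exists (fun s => perm (inj_ulsf s)) => [s _ | s].
    by apply/permP=> k'; rewrite permE /ulsf lift_perm_lift lift_perm_id liftK.
  move/(s _ =P _) => si0; apply/permP=> k.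
  case: (unliftP i k) => [k'|] ->; rewrite ?lift_perm_id //.
  by rewrite lift_perm_lift -si0 permE ulsfK.
by apply: eq_bigl => s; rewrite lift_perm_id eqxx.
Qed.

Lemma wt_liftR N (w : N.+1.-tuple 'I_n) (k : 'I_N.+1) (s : 'S_N) :
  val (wt (lift_perm ord_max k s) w) = rcons (val (wt s (del w k))) (tnth w k).
Proof.
rewrite /wt /= /mktuple /= enum_ordSr map_rcons -map_comp lift_perm_id.
congr rcons; apply: eq_map => i /=.
by rewrite widen_lift lift_perm_lift tnth_mktuple.
Qed.

Lemma bc_liftR N (w : N.+1.-tuple 'I_n) (k : 'I_N.+1) (s : 'S_N) :
  braidcoef p (lift_perm ord_max k s) (wt (lift_perm ord_max k s) w)
  = braidcoef p s (wt s (del w k)) * coefR w k.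
Proof.
set S := lift_perm ord_max k s.
have HS x : S (widen_ord (leqnSn N) x) = lift k (s x).
  by rewrite widen_lift lift_perm_lift.
have HM : S ord_max = k by rewrite lift_perm_id.
rewrite /braidcoef big_ord_recr /=.
rewrite [X in _ * X]big1 ?mulr1; last first.
  by move=> b /andP [Hb _]; move: (ltn_ord b) Hb; lia.
rewrite /coefR [X in _ = _ * X](reindex_inj (@perm_inj _ s)) /=.
rewrite [X in _ = _ * X]big_mkcond -big_split /=; apply: eq_bigr => a _.
rewrite big_mkcond big_ord_recr /= [in RHS]big_mkcond /=.
congr (_ * _).
  apply: eq_bigr => b _.
  by rewrite !HS lift_ltn !tnth_mktuple !HS.
by rewrite HM HS (lift_gtk k (s a)) ltn_ord /= !tnth_mktuple HM HS.
Qed.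

Lemma qsymR N f (w : N.+1.-tuple 'I_n) :
  qs N.+1 f w = \sum_(k < N.+1) coefR w k * qs N (dR (tnth w k) f) (del w k).
Proof.
rewrite qsymE (partition_big (fun s : 'S_N.+1 => s ord_max) predT) //.
apply: eq_bigr => k _.
rewrite (qsymE _ (del w k)) mulr_sumr reindex_lift_perm; apply: eq_bigr => s _.
rewrite bc_liftR /dR -wt_liftR.
by rewrite mulrA mulrC mulrA.
Qed.

Definition dL (l : 'I_n) (f : tens) : tens := fun t => f (l :: t).
Definition coefL N (w : N.+1.-tuple 'I_n) (k : 'I_N.+1) : F :=
  \prod_(c : 'I_N | (c < k)%N) p (tnth w k) (tnth w (lift k c)).

Lemma wt_liftL N (w : N.+1.-tuple 'I_n) (k : 'I_N.+1) (s : 'S_N) :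
  val (wt (lift_perm ord0 k s) w) = tnth w k :: val (wt s (del w k)).
Proof.
rewrite /wt /= /mktuple /= enum_ordSl /= -map_comp lift_perm_id.
congr cons; apply: eq_map => i /=.
by rewrite lift_perm_lift tnth_mktuple.
Qed.

Lemma bc_liftL N (w : N.+1.-tuple 'I_n) (k : 'I_N.+1) (s : 'S_N) :
  braidcoef p (lift_perm ord0 k s) (wt (lift_perm ord0 k s) w)
  = braidcoef p s (wt s (del w k)) * coefL w k.
Proof.
set S := lift_perm ord0 k s.
have HS x : S (lift ord0 x) = lift k (s x) by rewrite lift_perm_lift.
have HM : S ord0 = k by rewrite lift_perm_id.
rewrite /braidcoef big_ord_recl /= mulrC.
congr (_ * _).
  apply: eq_bigr => a _.
  rewrite big_mkcond big_ord_recl /= mul1r [in RHS]big_mkcond /=.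
  apply: eq_bigr => b _.
  rewrite !HS /bump !leq0n !add1n ltnS (lift_ltn k (s b) (s a)).
  by rewrite !tnth_mktuple !HS.
rewrite big_mkcond big_ord_recl /= mul1r /coefL.
rewrite [RHS](reindex_inj (@perm_inj _ s)) /= [RHS]big_mkcond /=.
apply: eq_bigr => b _.
by rewrite HS HM (lift_ltk k (s b)) !tnth_mktuple HS HM.
Qed.

Lemma qsymL N f (w : N.+1.-tuple 'I_n) :
  qs N.+1 f w = \sum_(k < N.+1) coefL w k * qs N (dL (tnth w k) f) (del w k).
Proof.
rewrite qsymE (partition_big (fun s : 'S_N.+1 => s ord0) predT) //.
apply: eq_bigr => k _.
rewrite (qsymE _ (del w k)) mulr_sumr reindex_lift_perm; apply: eq_bigr => s _.
rewrite bc_liftL /dL -wt_liftL.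
by rewrite mulrA mulrC mulrA.
Qed.

Lemma qsym0t (t : 0.-tuple 'I_n) g : qs 0 g t = g [::].
Proof.
rewrite qsymE (eq_bigr (fun _ => g [::])).
  by rewrite sumr_const card_Sn.
move=> s _; rewrite /braidcoef big_ord0 mulr1.
by have /size0nil -> := size_tuple (wt s t).
Qed.

Lemma qsym0 g w : qs 0 g w = if w is [::] then g [::] else 0.
Proof.
case: w => [|a w]; first exact: (qsym0t [tuple]).
by rewrite qsym_size.
Qed.

Lemma val1 (T : Type) (t : 1.-tuple T) : val t = [:: tnth t ord0].
Proof. by case: t => [[|a [|b r]] //= H]. Qed.

Lemma qsym1t (t : 1.-tuple 'I_n) g : qs 1 g t = g t.
Proof.
rewrite qsymR big_ord1 qsym0t /coefR big1; last by case.
by rewrite mul1r /dR [in RHS]val1.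
Qed.

Lemma qsym1 g x : qs 1 g [:: x] = g [:: x].
Proof. exact: (qsym1t [tuple x]). Qed.

Lemma qsym2 g x y : qs 2 g [:: x; y] = g [:: x; y] + p y x * g [:: y; x].
Proof.
have -> : [:: x; y] = val [tuple x; y] by [].
rewrite qsymR big_ord_recl big_ord1 !qsym1t /dR /coefR.
rewrite [X in X * _ + _]big_ord1 [X in _ + X * _]big1; last first.
  by case=> [[|c] Hc] //=.
rewrite mul1r addrC !val1 !tnth_mktuple /=.
congr (_ + _).
Qed.

Lemma qsym_local m u v : (forall t, size t = m -> u t = v t) -> qs m u = qs m v.
Proof.
move=> H; apply: functional_extensionality => w; rewrite /qsym.
by apply: eq_bigr => t _; apply: eq_bigr => s _; rewrite H // size_tuple.
Qed.

Lemma qsym_zero m w : qs m (@tzero F n) w = 0.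
Proof. by rewrite /qsym big1 // => t _; rewrite big1 // => s _; rewrite /tzero !mul0r. Qed.

Lemma qsymD m (u v : tens) w : qs m (fun t => u t + v t) w = qs m u w + qs m v w.
Proof.
rewrite /qsym -big_split; apply: eq_bigr => t _.
by rewrite -big_split; apply: eq_bigr => s _; rewrite !mulrDl.
Qed.

Lemma qsymZ m a (u : tens) w : qs m (fun t => a * u t) w = a * qs m u w.
Proof.
rewrite /qsym mulr_sumr; apply: eq_bigr => t _.
by rewrite mulr_sumr; apply: eq_bigr => s _; rewrite !mulrA.
Qed.

Lemma tmul_rcons (u v : tens) t l :
  tmul u v (rcons t l) = tmul u (dR l v) t + v [::] * u (rcons t l).
Proof.
rewrite /tmul size_rcons big_ord_recr /=.
rewrite take_oversize ?size_rcons // drop_oversize ?size_rcons // mulrC.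
congr (_ + _); apply: eq_bigr => k _ /=.
have Hk : (k <= size t)%N by rewrite -ltnS ltn_ord.
by rewrite -cats1 takel_cat // cats1 drop_rcons.
Qed.

Lemma tmul_cons (u v : tens) t l :
  tmul v u (l :: t) = tmul (dL l v) u t + v [::] * u (l :: t).
Proof.
by rewrite /tmul /= big_ord_recl /= addrC.
Qed.

Lemma ideal_r (u : tens) : (forall m w, qs m u w = 0) ->
  forall N v w, qs N (tmul u v) w = 0.
Proof.
move=> H; elim=> [|N IH] v w.
  rewrite qsym0; case: w => //; rewrite /tmul big_ord1 /=.
  by have := H 0%N [::]; rewrite qsym0 => ->; rewrite mul0r.
case: (eqVneq (size w) N.+1) => Hs; last by rewrite qsym_size.
pose tw : N.+1.-tuple 'I_n := Tuple (introT eqP Hs).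
rewrite (_ : w = tw) // qsymR.
rewrite (eq_bigr (fun k => v [::] * (coefR tw k * qs N (dR (tnth tw k) u) (del tw k)))).
  by rewrite -mulr_sumr -qsymR H mulr0.
move=> k _.
have -> : dR (tnth tw k) (tmul u v) =
   fun t => tmul u (dR (tnth tw k) v) t + v [::] * dR (tnth tw k) u t.
  by apply: functional_extensionality => t; rewrite /dR tmul_rcons.
by rewrite qsymD qsymZ IH add0r mulrCA.
Qed.

Lemma ideal_l (u : tens) : (forall m w, qs m u w = 0) ->
  forall N v w, qs N (tmul v u) w = 0.
Proof.
move=> H; elim=> [|N IH] v w.
  rewrite qsym0; case: w => //; rewrite /tmul big_ord1 /=.
  by have := H 0%N [::]; rewrite qsym0 => ->; rewrite mulr0.
case: (eqVneq (size w) N.+1) => Hs; last by rewrite qsym_size.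
pose tw : N.+1.-tuple 'I_n := Tuple (introT eqP Hs).
rewrite (_ : w = tw) // qsymL.
rewrite (eq_bigr (fun k => v [::] * (coefL tw k * qs N (dL (tnth tw k) u) (del tw k)))).
  by rewrite -mulr_sumr -qsymL H mulr0.
move=> k _.
have -> : dL (tnth tw k) (tmul v u) =
   fun t => tmul (dL (tnth tw k) v) u t + v [::] * dL (tnth tw k) u t.
  by apply: functional_extensionality => t; rewrite /dL tmul_cons.
by rewrite qsymD qsymZ IH add0r mulrCA.
Qed.

Lemma finsupp_mul (a b : tens) : finsupp a -> finsupp b -> finsupp (tmul a b).
Proof.
move=> [Na Ha] [Nb Hb]; exists (Na + Nb)%N => w Hw.
rewrite /tmul big1 // => k _.
have : (Na <= size (take k w))%N || (Nb <= size (drop k w))%N.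
  by rewrite size_take size_drop; case: ifP => ?; lia.
by case/orP => Hc; [rewrite (Ha _ Hc) mul0r | rewrite (Hb _ Hc) mulr0].
Qed.

Definition NI (u : tens) := finsupp u /\ forall m w, qs m u w = 0.

Lemma NI_nichols u : NI u <-> nichols_ideal p u.
Proof.
split=> [[Hf H]|[Hf H0 H1 H]].
  split=> //.
  - by have := H 0%N [::]; rewrite qsym0.
  - by case=> [|x [|y r]] // _; have := H 1%N [:: x]; rewrite qsym1.
  - by move=> m _; apply: functional_extensionality => w; rewrite H.
split=> // m w.
case: m => [|[|m]]; last by rewrite H.
- rewrite (qsym_local (v := @tzero F n)) ?qsym_zero //.
  by case=> // _; rewrite H0.
- rewrite (qsym_local (v := @tzero F n)) ?qsym_zero //;
  by move=> t Ht; rewrite H1.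
Qed.

Lemma NI_ext u v : (forall w, u w = v w) -> NI u -> NI v.
Proof.
move=> E; have -> : v = u by apply: functional_extensionality => w; rewrite E.
done.
Qed.

Lemma NI_add u v : NI u -> NI v -> NI (fun w => u w + v w).
Proof.
move=> [[N1 H1] Q1] [[N2 H2] Q2]; split.
  by exists (N1 + N2)%N => w Hw; rewrite H1 ?H2 ?addr0 //; lia.
by move=> m w; rewrite qsymD Q1 Q2 addr0.
Qed.

Lemma NI_scale a u : NI u -> NI (fun w => a * u w).
Proof.
move=> [[N1 H1] Q1]; split.
  by exists N1 => w Hw; rewrite H1 ?mulr0.
by move=> m w; rewrite qsymZ Q1 mulr0.
Qed.

Lemma NI_zero : NI (@tzero F n).
Proof. by split; [exists 0%N | move=> m w; rewrite qsym_zero]. Qed.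

Definition Xc (c : 'I_n -> F) : tens := fun w => \sum_(i < n) c i * @gen F n i w.

Lemma Xc_val c w : Xc c w = if w is [:: x] then c x else 0.
Proof.
rewrite /Xc /gen; case: w => [|x [|y r]].
- by rewrite big1 // => i _; rewrite mulr0.
- rewrite (bigD1 x) //= eqxx mulr1 big1 ?addr0 // => i Hi.
  by rewrite eqseq_cons andbT eq_sym (negbTE Hi) /= mulr0.
- by rewrite big1 // => i _; rewrite eqseq_cons andbF mulr0.
Qed.

Lemma tmul_XX c d w : tmul (Xc c) (Xc d) w = if w is [:: x; y] then c x * d y else 0.
Proof.
rewrite /tmul; case: w => [|x [|y [|z r]]].
- by rewrite big_ord1 /= !Xc_val mul0r.
- by rewrite big_ord_recl big_ord1 /= !Xc_val mul0r mulr0 addr0.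
- by rewrite big_ord_recl big_ord_recl big_ord1 /= !Xc_val !mul0r add0r addr0.
- rewrite big1 // => k _; rewrite !Xc_val.
  case E1: (take k _) => [|x' [|? ?]]; rewrite ?mul0r //.
  case E2: (drop k _) => [|y' [|? ?]]; rewrite ?mulr0 //.
  have := cat_take_drop k [:: x, y, z & r]; rewrite E1 E2 //.
Qed.

Lemma tmul_split (a A b B : tens) w :
  tmul a b w = tmul (tsub a A) b w + tmul A (tsub b B) w + tmul A B w.
Proof.
rewrite /tmul -!big_split; apply: eq_bigr => k _ /=.
rewrite /tsub /tadd /tscale; ring.
Qed.

Lemma finsupp_ext (u v : tens) : (forall w, u w = v w) -> finsupp u -> finsupp v.
Proof. by move=> E [N H]; exists N => w Hw; rewrite -E H. Qed.

Lemma VspBr (a b T : tens) k1 k2 :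
  Vsp p a -> Vsp p b ->
  (forall x y, (k1 * a [::x] * b [::y] - k2 * b [::x] * a [::y]) +
     p y x * (k1 * a [::y] * b [::x] - k2 * b [::y] * a [::x]) = 0) ->
  (forall w, T w = k1 * tmul a b w - k2 * tmul b a w) -> Vsp p T.
Proof.
case=> ca Ha0 [cb Hb0] HV HT.
have Ha : NI (tsub a (Xc ca)) by apply/NI_nichols.
have Hb : NI (tsub b (Xc cb)) by apply/NI_nichols.
have ca_val x : ca x = a [:: x].
  case: Ha0 => _ _ H1 _; have := H1 [:: x] erefl.
  have E := Xc_val ca [:: x]; rewrite /Xc /= in E.
  rewrite /tsub /tadd /tscale E => /eqP.
  by rewrite mulN1r subr_eq0 => /eqP ->.
have cb_val x : cb x = b [:: x].
  case: Hb0 => _ _ H1 _; have := H1 [:: x] erefl.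
  have E := Xc_val cb [:: x]; rewrite /Xc /= in E.
  rewrite /tsub /tadd /tscale E => /eqP.
  by rewrite mulN1r subr_eq0 => /eqP ->.
have fX c : finsupp (Xc c).
  by exists 2%N => w Hw; rewrite Xc_val; case: w Hw => [|x [|y r]].
have fa : finsupp a.
  apply: (finsupp_ext (u := fun w => tsub a (Xc ca) w + Xc ca w)).
    by move=> w; rewrite /tsub /tadd /tscale; ring.
  case: Ha => [[N1 H1] _]; case: (fX ca) => N2 H2.
  by exists (N1 + N2)%N => w Hw; rewrite H1 ?H2 ?addr0 //; lia.
have fb : finsupp b.
  apply: (finsupp_ext (u := fun w => tsub b (Xc cb) w + Xc cb w)).
    by move=> w; rewrite /tsub /tadd /tscale; ring.
  case: Hb => [[N1 H1] _]; case: (fX cb) => N2 H2.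
  by exists (N1 + N2)%N => w Hw; rewrite H1 ?H2 ?addr0 //; lia.
have NImr u v : NI u -> finsupp v -> NI (tmul u v).
  by move=> [fu Hu] fv; split; [exact: finsupp_mul | exact: (fun m => ideal_r Hu m v)].
have NIml u v : NI u -> finsupp v -> NI (tmul v u).
  by move=> [fu Hu] fv; split; [exact: finsupp_mul | exact: (fun m => ideal_l Hu m v)].
set Z : tens := fun w => k1 * tmul (Xc ca) (Xc cb) w - k2 * tmul (Xc cb) (Xc ca) w.
have HZ : NI Z.
  have Zs w : Z w = if w is [:: x; y] then
      k1 * a [::x] * b [::y] - k2 * b [::x] * a [::y] else 0.
    rewrite /Z !tmul_XX; case: w => [|x [|y [|z r]]]; rewrite ?mulr0 ?subr0 //.
    by rewrite !ca_val !cb_val !mulrA.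
  split.
    by exists 3%N => w Hw; rewrite Zs; case: w Hw => [|x [|y [|z r]]].
  move=> m w; case: (eqVneq m 2%N) => [->|Hm].
    case: w => [|x [|y [|z r]]]; try by rewrite qsym_size.
    by rewrite qsym2 !Zs.
  rewrite (qsym_local (v := @tzero F n)) ?qsym_zero // => t Ht.
  rewrite Zs; case: t Ht => [|x [|y [|z r]]] //= Ht.
  by move: Hm; rewrite -Ht eqxx.
exists (fun _ => 0); apply/NI_nichols.
apply: (NI_ext (u := fun w =>
   ((k1 * tmul (tsub a (Xc ca)) b w + k1 * tmul (Xc ca) (tsub b (Xc cb)) w) +
   ((- k2) * tmul (tsub b (Xc cb)) a w + (- k2) * tmul (Xc cb) (tsub a (Xc ca)) w))
   + Z w)).
  move=> w; rewrite /tsub /tadd /tscale HT (tmul_split a (Xc ca) b (Xc cb)).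
  rewrite (tmul_split b (Xc cb) a (Xc ca)) /Z /tsub /tadd /tscale.
  rewrite big1 ?mulr0 ?addr0 //; last by move=> i _; rewrite mul0r.
  ring.
apply: NI_add; last exact: HZ.
apply: NI_add; apply: NI_add; apply: NI_scale; auto.
Qed.

Lemma homog_delta d (u : tens) x : homog d u -> u [:: x] != 0 ->
  forall i, d i = (x == i) :> nat.
Proof. by move=> H Hu i; rewrite -(H _ Hu i) /= addn0. Qed.

Lemma pdeg_delta (d e : deg n) x y :
  (forall i, d i = (x == i) :> nat) -> (forall j, e j = (y == j) :> nat) ->
  pdeg p d e = p x y.
Proof.
move=> Hd He; rewrite /pdeg (bigD1 x) //= [X in _ * X]big1 ?mulr1 => [|i Hi].
  rewrite (bigD1 y) //= [X in _ * X]big1 ?mulr1 => [|j Hj].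
    by rewrite Hd He !eqxx muln1 expr1.
  by rewrite He eq_sym (negbTE Hj) muln0 expr0.
by apply: big1 => j _; rewrite Hd eq_sym (negbTE Hi) mul0n expr0.
Qed.

Lemma kap (d e : deg n) (a b : tens) x y :
  homog d a -> homog e b -> a [:: x] != 0 -> b [:: y] != 0 ->
  pdeg p d e = p x y /\ pdeg p e d = p y x.
Proof.
move=> ha hb Ha Hb.
have Hd := homog_delta ha Ha; have He := homog_delta hb Hb.
by split; apply: pdeg_delta.
Qed.

Lemma zero_or (A B c : F) : (A != 0 -> B != 0 -> c = 0) -> A * B * c = 0.
Proof.
move=> H.
have [->|HA] := eqVneq A 0; first by rewrite !mul0r.
have [->|HB] := eqVneq B 0; first by rewrite mulr0 mul0r.
by rewrite (H HA HB) mulr0.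
Qed.

Definition cond3 := (forall i, p i i ^+ 2 = 1) /\
  (forall i j, i != j -> p i j = 1 /\ p j i = 1).

Lemma Vsp_braided (H3 : cond3) d e (a b : tens) :
  homog d a -> homog e b -> Vsp p a -> Vsp p b -> Vsp p (braided_br p d e a b).
Proof.
move=> ha hb Va Vb; case: H3 => Hd Ho.
apply: (VspBr (k1 := 1) (k2 := pdeg p d e) Va Vb) => //; last first.
  by move=> w; rewrite /braided_br /tsub /tadd /tscale; ring.
move=> x y; case: (eqVneq x y) => [<-|Hxy].
  have -> : forall A B : F, 1 * A * B - pdeg p d e * B * A +
      p x x * (1 * A * B - pdeg p d e * B * A) =
      A * B * ((1 + p x x) * (1 - pdeg p d e)) by move=> *; ring.
  apply: zero_or => HA HB; have [-> _] := kap ha hb HA HB.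
  have -> : (1 + p x x) * (1 - p x x) = 1 - p x x ^+ 2 by ring.
  by rewrite Hd subrr.
case: (Ho _ _ Hxy) => H1 H2; rewrite H2.
have -> : forall A B C D : F, 1 * A * B - pdeg p d e * C * D +
      1 * (1 * D * C - pdeg p d e * B * A) =
      A * B * (1 - pdeg p d e) + D * C * (1 - pdeg p d e) by move=> *; ring.
rewrite !zero_or ?addr0 // => HA HB; have [-> _] := kap ha hb HA HB;
  by rewrite ?H1 ?H2 subrr.

Qed.

Lemma Vsp_lieL (H3 : cond3) d e (a b : tens) :
  homog d a -> homog e b -> Vsp p a -> Vsp p b -> Vsp p (lieL_br p d e a b).
Proof.
move=> ha hb Va Vb; case: H3 => Hd Ho.
apply: (VspBr (k1 := pdeg p e d) (k2 := pdeg p d e) Va Vb) => //; last first.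
  by move=> w; rewrite /lieL_br /tsub /tadd /tscale; ring.
move=> x y; case: (eqVneq x y) => [<-|Hxy].
  have -> : forall A B : F, pdeg p e d * A * B - pdeg p d e * B * A +
      p x x * (pdeg p e d * A * B - pdeg p d e * B * A) =
      A * B * ((1 + p x x) * (pdeg p e d - pdeg p d e)) by move=> *; ring.
  apply: zero_or => HA HB; have [-> ->] := kap ha hb HA HB.
  by rewrite subrr mulr0.
case: (Ho _ _ Hxy) => H1 H2; rewrite H2.
have -> : forall A B C D : F, pdeg p e d * A * B - pdeg p d e * C * D +
      1 * (pdeg p e d * D * C - pdeg p d e * B * A) =
      A * B * (pdeg p e d - pdeg p d e) + D * C * (pdeg p e d - pdeg p d e)
  by move=> *; ring.
by rewrite !zero_or ?addr0 // => HA HB; have [-> ->] := kap ha hb HA HB;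
  rewrite ?H1 ?H2 subrr.
Qed.

Lemma Vsp_comm (H3 : cond3) (a b : tens) :
  Vsp p a -> Vsp p b -> Vsp p (comm_br a b).
Proof.
move=> Va Vb; case: H3 => Hd Ho.
apply: (VspBr (k1 := 1) (k2 := 1) Va Vb) => //; last first.
  by move=> w; rewrite /comm_br /tsub /tadd /tscale; ring.
move=> x y; case: (eqVneq x y) => [<-|Hxy]; first by ring.
by case: (Ho _ _ Hxy) => H1 H2; rewrite H2; ring.
Qed.

Lemma VspE (u : tens) : Vsp p u <-> exists c, NI (tsub u (Xc c)).
Proof.
split=> [[c Hc]|[c Hc]]; exists c; [apply/NI_nichols | apply/NI_nichols]; exact: Hc.
Qed.

Lemma Vsp_subspace : subspaceB p (Vsp p).
Proof.
split.
- apply/VspE; exists (fun _ => 0); apply: NI_ext NI_zero => w.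
  rewrite /tsub /tadd /tscale /tzero /Xc big1 ?mulr0 ?addr0 // => i _.
  by rewrite mul0r.
- move=> u v /VspE [cu Hu] /VspE [cv Hv]; apply/VspE; exists (fun i => cu i + cv i).
  apply: NI_ext (NI_add Hu Hv) => w.
  rewrite /tsub /tadd /tscale !Xc_val.
  by case: w => [|x [|y r]]; ring.
- move=> a u /VspE [cu Hu]; apply/VspE; exists (fun i => a * cu i).
  apply: NI_ext (NI_scale a Hu) => w.
  rewrite /tsub /tadd /tscale !Xc_val.
  by case: w => [|x [|y r]]; ring.
- move=> u /NI_nichols Hu; apply/VspE; exists (fun _ => 0).
  apply: NI_ext Hu => w.
  rewrite /tsub /tadd /tscale /Xc big1 ?mulr0 ?addr0 // => i _.
  by rewrite mul0r.
Qed.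

Lemma Vsp_V : contains_V (Vsp p).
Proof.
move=> i; apply/VspE; exists (fun j => (j == i)%:R); apply: NI_ext NI_zero => w.
rewrite /tsub /tadd /tscale /tzero /Xc (bigD1 i) //= eqxx mul1r big1 ?addr0.
  by rewrite mulN1r subrr.
by move=> j Hj; rewrite (negbTE Hj) mul0r.
Qed.

Lemma Vsp_in (P : tens -> Prop) u :
  subspaceB p P -> contains_V P -> Vsp p u -> P u.
Proof.
move=> [P0 PD PZ PI] PV /VspE [c Hc].
have HX : forall s : seq 'I_n, P (fun w => \sum_(i <- s) c i * gen F i w).
  elim=> [|i s IH].
    have -> : (fun w => \sum_(i <- [::]) c i * gen F i w) = @tzero F n.
      by apply: functional_extensionality => w; rewrite big_nil.
    exact: P0.
  have -> : (fun w => \sum_(j <- i :: s) c j * gen F j w) =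
      tadd (tscale (c i) (gen F i)) (fun w => \sum_(j <- s) c j * gen F j w).
    by apply: functional_extensionality => w; rewrite big_cons.
  by apply: PD => //; apply: PZ; apply: PV.
have -> : u = tadd (tsub u (Xc c)) (Xc c).
  by apply: functional_extensionality => w; rewrite /tadd /tsub /tadd /tscale; ring.
apply: PD; first by apply: PI; apply/NI_nichols.
exact: HX.
Qed.

Definition brG (c1 c2 : 'I_n -> 'I_n -> F) (i j : 'I_n) : tens :=
  fun w => c1 i j * (w == [:: i; j])%:R - c2 i j * (w == [:: j; i])%:R.
Definition S2 (lam : 'I_n -> 'I_n -> F) (br : 'I_n -> 'I_n -> tens) : tens :=
  fun w => \sum_i \sum_j lam i j * br i j w.
Definition Q2 (v : tens) := forall x y, v [:: x; y] + p y x * v [:: y; x] = 0.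
Definition P2 br (u : tens) :=
  u [::] = 0 /\ exists lam, Q2 (fun w => u w - S2 lam br w).

Lemma sum_delta (g : 'I_n -> F) y : \sum_j g j * (y == j)%:R = g y.
Proof.
rewrite (bigD1 y) //= eqxx mulr1 big1 ?addr0 // => j Hj.
by rewrite eq_sym (negbTE Hj) mulr0.
Qed.

Lemma eq2R (x y i j : 'I_n) :
  (([:: x; y] == [:: i; j]) %:R : F) = (x == i)%:R * (y == j)%:R.
Proof. by rewrite !eqseq_cons andbT; case: (x == i); case: (y == j); rewrite /= ?mulr1 ?mulr0. Qed.

Lemma sum2_delta (f : 'I_n -> 'I_n -> F) x y :
  \sum_i \sum_j f i j * (([:: x; y] == [:: i; j]) %:R) = f x y.
Proof.
rewrite -[RHS](sum_delta (fun i => f i y) x).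
apply: eq_bigr => i _; rewrite -(sum_delta (f i) y) mulr_suml.
by apply: eq_bigr => j _; rewrite eq2R; ring.
Qed.

Lemma S2_brG lam c1 c2 x y :
  S2 lam (brG c1 c2) [:: x; y] = lam x y * c1 x y - lam y x * c2 y x.
Proof.
rewrite /S2 /brG.
rewrite (eq_bigr (fun i => \sum_j (lam i j * c1 i j) * (([:: x; y] == [:: i; j]) %:R)
   - \sum_j (lam i j * c2 i j) * (([:: x; y] == [:: j; i]) %:R))); last first.
  by move=> i _; rewrite -sumrB; apply: eq_bigr => j _; ring.
rewrite sumrB sum2_delta exchange_big /=.
by rewrite (sum2_delta (fun a b => lam b a * c2 b a)).
Qed.

Lemma S2_add l1 l2 br w :
  S2 (fun i j => l1 i j + l2 i j) br w = S2 l1 br w + S2 l2 br w.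
Proof.
rewrite /S2 -big_split; apply: eq_bigr => i _.
by rewrite -big_split; apply: eq_bigr => j _; rewrite mulrDl.
Qed.

Lemma S2_scale a l br w : S2 (fun i j => a * l i j) br w = a * S2 l br w.
Proof.
rewrite /S2 mulr_sumr; apply: eq_bigr => i _.
by rewrite mulr_sumr; apply: eq_bigr => j _; rewrite mulrA.
Qed.

Lemma S2_0 br w : S2 (fun _ _ => 0) br w = 0.
Proof. by rewrite /S2 big1 // => i _; rewrite big1 // => j _; rewrite mul0r. Qed.

Lemma Q2_ext (f g : tens) : (forall w, f w = g w) -> Q2 f -> Q2 g.
Proof. by move=> E H x y; rewrite -!E. Qed.

Lemma Q2_add (f g : tens) : Q2 f -> Q2 g -> Q2 (fun w => f w + g w).
Proof. by move=> Hf Hg x y; have := Hf x y; have := Hg x y; move=> E1 E2; rewrite -[RHS](addr0 0) -{1}E1 -E2; ring. Qed.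

Lemma Q2_scale a (f : tens) : Q2 f -> Q2 (fun w => a * f w).
Proof. by move=> Hf x y; have := Hf x y => E; rewrite -[RHS](mulr0 a) -E; ring. Qed.

Lemma P2_subspace br : subspaceB p (P2 br).
Proof.
split.
- split=> //; exists (fun _ _ => 0) => x y /=.
  by rewrite !S2_0 /tzero subr0 mulr0 addr0.
- move=> u v [Hu0 [lu Qu]] [Hv0 [lv Qv]]; split; first by rewrite /tadd Hu0 Hv0 addr0.
  exists (fun i j => lu i j + lv i j).
  apply: (Q2_ext (f := fun w => (u w - S2 lu br w) + (v w - S2 lv br w))).
    by move=> w; rewrite /tadd S2_add; ring.
  exact: Q2_add.
- move=> a u [Hu0 [lu Qu]]; split; first by rewrite /tscale Hu0 mulr0.
  exists (fun i j => a * lu i j).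
  apply: (Q2_ext (f := fun w => a * (u w - S2 lu br w))).
    by move=> w; rewrite /tscale S2_scale; ring.
  exact: Q2_scale.
- move=> u /NI_nichols [_ Hq]; split; first by have := Hq 0%N [::]; rewrite qsym0.
  exists (fun _ _ => 0) => x y /=; rewrite !S2_0 !subr0.
  by have := Hq 2%N [:: x; y]; rewrite qsym2.
Qed.

Lemma gen1 (i x : 'I_n) : gen F i [:: x] = (x == i)%:R.
Proof. by rewrite /gen eqseq_cons andbT; case: (x == i). Qed.

Lemma P2_V br : contains_V (P2 br).
Proof.
move=> i; split=> //; exists (fun _ _ => 0) => x y /=.
by rewrite !S2_0 !subr0 /gen !eqseq_cons !andbF mulr0 addr0.
Qed.

Lemma tmul0 (u v : tens) : tmul u v [::] = u [::] * v [::].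
Proof. by rewrite /tmul big_ord1. Qed.

Lemma tmul2 (u v : tens) x y :
  tmul u v [:: x; y] = u [::] * v [:: x; y] + u [:: x] * v [:: y] + u [:: x; y] * v [::].
Proof. by rewrite /tmul big_ord_recl big_ord_recl big_ord1 /= addrA. Qed.

Lemma P2_br (a b T : tens) k1 k2 c1 c2 :
  a [::] = 0 -> b [::] = 0 ->
  (forall w, T w = k1 * tmul a b w - k2 * tmul b a w) ->
  (forall x y, k1 * a [:: x] * b [:: y] - k2 * b [:: x] * a [:: y] =
      a [:: x] * b [:: y] * c1 x y - a [:: y] * b [:: x] * c2 y x) ->
  P2 (brG c1 c2) T.
Proof.
move=> a0 b0 HT Hc; split; first by rewrite HT !tmul0 a0 b0 !mulr0 subrr.
exists (fun i j => a [:: i] * b [:: j]).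
have Z : forall x y, T [:: x; y] - S2 (fun i j => a [:: i] * b [:: j]) (brG c1 c2) [:: x; y] = 0.
  move=> x y; rewrite HT S2_brG !tmul2 a0 b0 !mul0r !mulr0 !add0r !addr0.
  by rewrite -!mulrA (mulrA k1) (mulrA k2) Hc; ring.
by move=> x y /=; rewrite !Z mulr0 addr0.
Qed.

Lemma P2_get c1 c2 (u : tens) : P2 (brG c1 c2) u -> exists lam, forall x y,
  (u [:: x; y] - (lam x y * c1 x y - lam y x * c2 y x)) +
  p y x * (u [:: y; x] - (lam y x * c1 y x - lam x y * c2 x y)) = 0.
Proof.
by case=> _ [lam Q]; exists lam => x y; have := Q x y; rewrite /= !S2_brG.
Qed.

Definition delta (i : 'I_n) : deg n := fun k => (i == k) : nat.

Lemma homog_gen i : homog (delta i) (gen F i).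
Proof.
move=> w; rewrite /gen; case: (eqVneq w [:: i]) => [-> _ k /=|_]; first by rewrite addn0.
by rewrite eqxx.
Qed.

Lemma pdeg_dd i j : pdeg p (delta i) (delta j) = p i j.
Proof. by apply: pdeg_delta. Qed.

Definition gB (i j : 'I_n) := braided_br p (delta i) (delta j) (gen F i) (gen F j).
Definition gL (i j : 'I_n) := lieL_br p (delta i) (delta j) (gen F i) (gen F j).
Definition gC (i j : 'I_n) := comm_br (gen F i) (gen F j).

Lemma LV_gB i j : LV p (gB i j).
Proof. by move=> P _ HV Hc; apply: Hc; rewrite ?HV //; apply: homog_gen. Qed.
Lemma LVL_gL i j : LV_L p (gL i j).
Proof. by move=> P _ HV Hc; apply: Hc; rewrite ?HV //; apply: homog_gen. Qed.
Lemma LVm_gC i j : LV_minus p (gC i j).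
Proof. by move=> P _ HV Hc; apply: Hc; rewrite ?HV //; apply: homog_gen. Qed.

Lemma gen0 (i : 'I_n) : gen F i [::] = 0.
Proof. by []. Qed.
Lemma gen2 (i x y : 'I_n) : gen F i [:: x; y] = 0.
Proof. by rewrite /gen !eqseq_cons andbF. Qed.

Lemma tmulgg (i j x y : 'I_n) :
  tmul (gen F i) (gen F j) [:: x; y] = (x == i)%:R * (y == j)%:R.
Proof. by rewrite tmul2 !gen0 !gen2 !gen1 !mul0r add0r addr0. Qed.

Lemma gB_val i j x y : gB i j [:: x; y] =
  (x == i)%:R * (y == j)%:R - p i j * ((x == j)%:R * (y == i)%:R).
Proof. by rewrite /gB /braided_br /tsub /tadd /tscale !tmulgg pdeg_dd mulN1r. Qed.

Lemma gL_val i j x y : gL i j [:: x; y] =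
  p j i * ((x == i)%:R * (y == j)%:R) - p i j * ((x == j)%:R * (y == i)%:R).
Proof. by rewrite /gL /lieL_br /tsub /tadd /tscale !tmulgg !pdeg_dd mulN1r. Qed.

Lemma gC_val i j x y : gC i j [:: x; y] =
  (x == i)%:R * (y == j)%:R - (x == j)%:R * (y == i)%:R.
Proof. by rewrite /gC /comm_br /tsub /tadd /tscale !tmulgg mulN1r. Qed.

Definition c1 : 'I_n -> 'I_n -> F := fun _ _ => 1.
Definition pT : 'I_n -> 'I_n -> F := fun i j => p j i.

Lemma eq_from_diff (X Y Z : F) : X - Y = Z -> Z = 0 -> X = Y.
Proof. by move=> <- /eqP; rewrite subr_eq0 => /eqP. Qed.

Lemma LV_P2 u : LV p u -> P2 (brG c1 p) u.
Proof.
move=> H; apply: H; [exact: P2_subspace | exact: P2_V |].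
move=> d e a b ha hb [a0 _] [b0 _].
apply: (P2_br (k1 := 1) (k2 := pdeg p d e) a0 b0).
  by move=> w; rewrite /braided_br /tsub /tadd /tscale; ring.
move=> x y; rewrite /c1.
have : a [:: y] * b [:: x] * (pdeg p d e - p y x) = 0.
  by apply: zero_or => HA HB; have [-> _] := kap ha hb HA HB; rewrite subrr.
move=> E; apply: (eq_from_diff (Z := - (a [:: y] * b [:: x] * (pdeg p d e - p y x)))).
  by ring.
by rewrite E oppr0.
Qed.

Lemma LVL_P2 u : LV_L p u -> P2 (brG pT p) u.
Proof.
move=> H; apply: H; [exact: P2_subspace | exact: P2_V |].
move=> d e a b ha hb [a0 _] [b0 _].
apply: (P2_br (k1 := pdeg p e d) (k2 := pdeg p d e) a0 b0).
  by move=> w; rewrite /lieL_br /tsub /tadd /tscale; ring.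
move=> x y; rewrite /pT.
have E1 : a [:: y] * b [:: x] * (pdeg p d e - p y x) = 0.
  by apply: zero_or => HA HB; have [-> _] := kap ha hb HA HB; rewrite subrr.
have E2 : a [:: x] * b [:: y] * (pdeg p e d - p y x) = 0.
  by apply: zero_or => HA HB; have [_ ->] := kap ha hb HA HB; rewrite subrr.
apply: (eq_from_diff (Z := a [:: x] * b [:: y] * (pdeg p e d - p y x)
   - a [:: y] * b [:: x] * (pdeg p d e - p y x))).
  by ring.
by rewrite E1 E2 subrr.
Qed.

Lemma LVm_P2 u : LV_minus p u -> P2 (brG c1 c1) u.
Proof.
move=> H; apply: H; [exact: P2_subspace | exact: P2_V |].
move=> a b [a0 _] [b0 _].
apply: (P2_br (k1 := 1) (k2 := 1) a0 b0).
  by move=> w; rewrite /comm_br /tsub /tadd /tscale; ring.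
by move=> x y; rewrite /c1; ring.
Qed.

Lemma sub1_eq0 (a : F) : 1 - a = 0 -> a = 1.
Proof. by move/eqP; rewrite subr_eq0 => /eqP. Qed.

Lemma algC (a b X Y N N' : F) :
  (1 - b) - X * (1 - a * b) = 0 -> (a - 1) - Y * (1 - a * b) = 0 ->
  (1 - a * b) - N * (1 - b) = 0 -> N * (1 - a) = 0 ->
  (1 - a * b) - N' * (1 - a) = 0 -> N' * (1 - b) = 0 -> a = 1 /\ b = 1.
Proof.
move=> E1 E2 E3 E4 E5 E6.
have [HD|HD] := eqVneq (1 - a * b) 0.
  move: E1 E2; rewrite HD !mulr0 !subr0 => /sub1_eq0 -> /eqP.
  by rewrite subr_eq0 => /eqP.
have HN : N != 0.
  by apply/eqP => HN0; move: E3; rewrite HN0 mul0r subr0 => /eqP; rewrite (negbTE HD).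
have HN' : N' != 0.
  by apply/eqP => HN0; move: E5; rewrite HN0 mul0r subr0 => /eqP; rewrite (negbTE HD).
move/eqP: E4; rewrite mulf_eq0 (negbTE HN) /= => /eqP /sub1_eq0 ->.
by move/eqP: E6; rewrite mulf_eq0 (negbTE HN') /= => /eqP /sub1_eq0 ->.
Qed.

Lemma algL (a b X Y N N' : F) : a != 0 -> b != 0 ->
  b * (1 - a) - X * (1 - a * b) = 0 -> a * (1 - b) + Y * (1 - a * b) = 0 ->
  (1 - a * b) - b * N * (1 - a) = 0 -> a * N * (1 - b) = 0 ->
  (1 - a * b) - a * N' * (1 - b) = 0 -> b * N' * (1 - a) = 0 -> a = 1 /\ b = 1.
Proof.
move=> Ha Hb E1 E2 E3 E4 E5 E6.
have [HD|HD] := eqVneq (1 - a * b) 0.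
  move: E1 E2; rewrite HD !mulr0 subr0 addr0 => /eqP E1 /eqP E2.
  move: E1 E2; rewrite !mulf_eq0 (negbTE Ha) (negbTE Hb) /=.
  by move=> /eqP /sub1_eq0 -> /eqP /sub1_eq0 ->.
have HN : N != 0.
  by apply/eqP => HN0; move: E3; rewrite HN0 mulr0 mul0r subr0 => /eqP; rewrite (negbTE HD).
have Hb1 : 1 - b = 0.
  by move/eqP: E4; rewrite !mulf_eq0 (negbTE Ha) (negbTE HN) /= => /eqP.
by move: E5 HD; rewrite Hb1 mulr0 subr0 => ->; rewrite eqxx.
Qed.

Lemma eqR1 (x : 'I_n) : ((x == x)%:R : F) = 1.
Proof. by rewrite eqxx. Qed.
Lemma eqR0 (x y : 'I_n) : x != y -> ((x == y)%:R : F) = 0.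
Proof. by move/negbTE ->. Qed.

Lemma T23 : (forall u, LV p u <-> LV_minus p u) -> cond3.
Proof.
move=> H; split.
  move=> i; have := LV_gB i i => /H /LVm_P2 /P2_get [lam E].
  have := E i i; rewrite !gB_val !eqR1 /c1 => E1.
  have : 1 - p i i ^+ 2 = 0 by rewrite -E1; ring.
  by move/eqP; rewrite subr_eq0 eq_sym => /eqP.
move=> i j Hij; have Hji : j != i by rewrite eq_sym.
have := LVm_gC i j => /H /LV_P2 /P2_get [A EA].
have := LV_gB i j => /H /LVm_P2 /P2_get [M EM].
have := LV_gB j i => /H /LVm_P2 /P2_get [M' EM'].
have := EA i j; have := EA j i; have := EM i j; have := EM j i;
  have := EM' i j; have := EM' j i.
rewrite !gB_val !gC_val !eqR1 !(eqR0 Hij) !(eqR0 Hji) /c1.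
move=> F6 F5 F4 F3 F2 F1.
apply: (@algC (p i j) (p j i) (A i j) (A j i) (M i j - M j i) (M' j i - M' i j));
  first [by rewrite -F1; ring | by rewrite -F2; ring | by rewrite -F3; ring
        | by rewrite -F4; ring | by rewrite -F5; ring | by rewrite -F6; ring].
Qed.

Lemma T13 : (forall i j, p i j != 0) -> (forall u, LV p u <-> LV_L p u) -> cond3.
Proof.
move=> Hp H; split.
  move=> i; have := LV_gB i i => /H /LVL_P2 /P2_get [lam E].
  have := E i i; rewrite !gB_val !eqR1 /pT => E1.
  have : 1 - p i i ^+ 2 = 0 by rewrite -E1; ring.
  by move/eqP; rewrite subr_eq0 eq_sym => /eqP.
move=> i j Hij; have Hji : j != i by rewrite eq_sym.
have := LVL_gL i j => /H /LV_P2 /P2_get [A EA].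
have := LV_gB i j => /H /LVL_P2 /P2_get [M EM].
have := LV_gB j i => /H /LVL_P2 /P2_get [M' EM'].
have := EA i j; have := EA j i; have := EM i j; have := EM j i;
  have := EM' i j; have := EM' j i.
rewrite !gB_val !gL_val !eqR1 !(eqR0 Hij) !(eqR0 Hji) /c1 /pT.
move=> F6 F5 F4 F3 F2 F1.
apply: (@algL (p i j) (p j i) (A i j) (A j i) (M i j - M j i) (M' j i - M' i j)
   (Hp i j) (Hp j i));
  first [by rewrite -F1; ring | by rewrite -F2; ring | by rewrite -F3; ring
        | by rewrite -F4; ring | by rewrite -F5; ring | by rewrite -F6; ring
        | by rewrite -oppr0 -F2; ring | by rewrite -oppr0 -F1; ring].
Qed.

Lemma T3 : cond3 -> forall u,
  [/\ LV p u <-> LV_L p u, LV p u <-> Vsp p u & LV p u <-> LV_minus p u].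
Proof.
move=> H3 u.
have LVV : LV p u -> Vsp p u.
  by move=> Hu; apply: Hu; [exact: Vsp_subspace | exact: Vsp_V |
     move=> d e a b ha hb Va Vb; exact: Vsp_braided].
have LVLV : LV_L p u -> Vsp p u.
  by move=> Hu; apply: Hu; [exact: Vsp_subspace | exact: Vsp_V |
     move=> d e a b ha hb Va Vb; exact: Vsp_lieL].
have LVmV : LV_minus p u -> Vsp p u.
  by move=> Hu; apply: Hu; [exact: Vsp_subspace | exact: Vsp_V |
     move=> a b Va Vb; exact: Vsp_comm].
have VLV : Vsp p u -> LV p u by move=> Hu P HP HV _; exact: Vsp_in.
have VLVL : Vsp p u -> LV_L p u by move=> Hu P HP HV _; exact: Vsp_in.
have VLVm : Vsp p u -> LV_minus p u by move=> Hu P HP HV _; exact: Vsp_in.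
split; split; by auto.
Qed.

End S.

Theorem proposition5p2 (F : fieldType) (n : nat) (p : 'I_n -> 'I_n -> F) :
  [pchar F] =i pred0 ->
  (forall i j, p i j != 0) ->
  [/\ ((forall u, LV p u <-> LV_L p u) <-> (forall u, LV p u <-> LV_minus p u)),
      ((forall u, LV p u <-> LV_minus p u) <->
         ((forall i, p i i ^+ 2 = 1) /\
          (forall i j, i != j -> p i j = 1 /\ p j i = 1)))
    & (((forall i, p i i ^+ 2 = 1) /\
        (forall i j, i != j -> p i j = 1 /\ p j i = 1)) ->
       forall u, (LV p u <-> LV_L p u) /\ (LV p u <-> Vsp p u))].
Proof.
move=> _ Hp.
have H3 := @T3 F n p.
split.
- split=> H u.
    by have [_ _ ?] := H3 (T13 Hp H) u.
  by have [? _ _] := H3 (T23 H) u.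
- split; first exact: T23.
  by move=> C u; have [_ _ ?] := H3 C u.
- by move=> C u; have [? ? _] := H3 C u.
Qed.
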